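(* Let $A$ be a finite alphabet with $|A|\ge2$. If $Z\subseteq A^+$ is a finite code of standard form and $|Z|$ is a prime number, then $Z$ is not an alt-induced code.
   Context: $A^+$ is the set of non-empty words over $A$; $|S|$ denotes cardinality. A code is a subset of $A^+$ in which every word has at most one factorization into its elements. A finite code $Z$ over $A$ is of standard form if every word of $Z$ has length at least $2$, it is not the case that all words of $Z$ begin with the same letter, and it is not the case that all words of $Z$ end with the same letter. For non-empty $X,Y\subseteq A^+$, $(X,Y)$ is an alternative code if $XY=\{xy:x\in X,y\in Y\}$ is a code and each element of $XY$ has exactly one factorization $xy$ with $x\in X,y\in Y$ (equivalently, no word admits two different similar alternative factorizations on $(X,Y)$). $Z$ is an alt-induced code if $Z=XY$ for some alternative code $(X,Y)$. *)

(* Defs.v *)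
From mathcomp Require Import all_boot.
Set Implicit Arguments. Unset Strict Implicit. Unset Printing Implicit Defensive.

Definition lang (A : Type) := seq A -> Prop.

Definition in_Aplus (A : Type) (L : lang A) : Prop :=
  forall w, L w -> w <> [::].

Definition is_code (A : eqType) (L : lang A) : Prop :=
  in_Aplus L /\
  forall l1 l2 : seq (seq A),
    (forall u, u \in l1 -> L u) -> (forall u, u \in l2 -> L u) ->
    flatten l1 = flatten l2 -> l1 = l2.

Definition lang_prod (A : Type) (X Y : lang A) : lang A :=
  fun w => exists x y, X x /\ Y y /\ w = x ++ y.

Definition alternative_code (A : eqType) (X Y : lang A) : Prop :=
  (exists x, X x) /\ (exists y, Y y) /\ in_Aplus X /\ in_Aplus Y /\
  is_code (lang_prod X Y) /\
  (forall x1 y1 x2 y2, X x1 -> Y y1 -> X x2 -> Y y2 ->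
     x1 ++ y1 = x2 ++ y2 -> x1 = x2 /\ y1 = y2).

Definition alt_induced (A : eqType) (Z : lang A) : Prop :=
  exists X Y : lang A, alternative_code X Y /\
    forall w, Z w <-> lang_prod X Y w.

(* A finite set of words is given as a duplicate-free list; its cardinality is
   its size. Standard form: *)
Definition standard_form (A : eqType) (Z : seq (seq A)) : Prop :=
  (forall w, w \in Z -> 2 <= size w) /\
  ~ (exists a : A, forall w, w \in Z -> ohead w = Some a) /\
  ~ (exists a : A, forall w, w \in Z -> ohead (rev w) = Some a).

(* Main.v *)
Require Import Defs.
From mathcomp Require Import all_boot.
From Stdlib Require Import ClassicalEpsilon.

Definition decb (P : Prop) : bool := if excluded_middle_informative P then true else false.
Lemma decbP (P : Prop) : reflect P (decb P).
Proof. by rewrite /decb; case: excluded_middle_informative => h; constructor. Qed.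

Theorem corollaryC (A : finType) (Z : seq (seq A)) :
  2 <= #|A| ->
  uniq Z ->
  is_code (fun w => w \in Z) ->
  standard_form Z ->
  prime (size Z) ->
  ~ alt_induced (fun w => w \in Z).
Proof.
move=> _ uZ _ [_ [nh nl]] pZ [X [Y [[[x0 Xx0] [[y0 Yy0] [pX [pY [_ alt]]]]] eqZ]]].
pose P := flatten [seq [seq take i z | i <- iota 0 (size z).+1] | z <- Z].
pose S := flatten [seq [seq drop i z | i <- iota 0 (size z).+1] | z <- Z].
pose SX := undup (filter (fun x => decb (X x)) P).
pose SY := undup (filter (fun y => decb (Y y)) S).
have SXP x : (x \in SX) <-> X x.
  rewrite mem_undup mem_filter; split; first by case/andP=> /decbP.
  move=> Xx; apply/andP; split; first by apply/decbP.
  have Zz : (x ++ y0) \in Z by apply/eqZ; exists x, y0.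
  apply/flattenP; exists [seq take i (x ++ y0) | i <- iota 0 (size (x ++ y0)).+1].
    by apply/mapP; exists (x ++ y0).
  apply/mapP; exists (size x); last by rewrite take_size_cat.
  by rewrite mem_iota add0n size_cat ltnS leq_addr.
have SYP y : (y \in SY) <-> Y y.
  rewrite mem_undup mem_filter; split; first by case/andP=> /decbP.
  move=> Yy; apply/andP; split; first by apply/decbP.
  have Zz : (x0 ++ y) \in Z by apply/eqZ; exists x0, y.
  apply/flattenP; exists [seq drop i (x0 ++ y) | i <- iota 0 (size (x0 ++ y)).+1].
    by apply/mapP; exists (x0 ++ y).
  apply/mapP; exists (size x0); last by rewrite drop_size_cat.
  by rewrite mem_iota add0n size_cat ltnS leq_addr.
have upr : uniq [seq x ++ y | x <- SX, y <- SY].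
  apply: allpairs_uniq; rewrite ?undup_uniq //.
  move=> [a b] [c d] /allpairsP [[a' b'] [/= h1 h2 [-> ->]]]
    /allpairsP [[c' d'] [/= h3 h4 [-> ->]]] /= e.
  by have [-> ->] := alt _ _ _ _ (proj1 (SXP _) h1) (proj1 (SYP _) h2)
    (proj1 (SXP _) h3) (proj1 (SYP _) h4) e.
have pe : perm_eq Z [seq x ++ y | x <- SX, y <- SY].
  apply: uniq_perm => // z; apply/idP/idP.
    move/eqZ=> [x [y [Xx [Yy ->]]]]; apply/allpairsP; exists (x, y).
    by split => //; [apply/SXP | apply/SYP].
  move/allpairsP=> [[x y] [/= h1 h2 ->]]; apply/eqZ; exists x, y.
  by split; [apply/SXP | split => //; apply/SYP].
have sz := perm_size pe; rewrite size_allpairs in sz.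
have : size SX %| size Z by rewrite sz dvdn_mulr.
case/primeP: pZ => p1 /[apply] /orP [] /eqP e1.
- case E : SX e1 => [|x [|? ?]] //= _.
  have Xx : X x by apply/SXP; rewrite E inE.
  case Ex : x (pX x Xx) => [|a t] // _.
  apply: nh; exists a => w /eqZ [x' [y [Xx' [_ ->]]]].
  have : x' \in SX by apply/SXP.
  by rewrite E inE => /eqP ->; rewrite Ex.
- have e2 : size SY = 1.
    move: sz; rewrite e1 => sz; apply/eqP; rewrite -(eqn_pmul2l (ltnW p1)).
    by rewrite muln1 -sz.
  case E : SY e2 => [|y [|? ?]] //= _.
  have Yy : Y y by apply/SYP; rewrite E inE.
  case/lastP Ey : y (pY y Yy) => [|t b] // _.
  apply: nl; exists b => w /eqZ [x [y' [_ [Yy' ->]]]].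
  have : y' \in SY by apply/SYP.
  by rewrite E inE => /eqP ->; rewrite Ey rev_cat rev_rcons.
Qed.
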